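(* Let $L$ be a modular link with labelled code words $w_1,\dots,w_c$ as in the context, with total period $\overline{n}$, embedded in the Lorenz template. For each $i\in\{1,\dots,\overline{n}\}$ let $s_i$ be the infinite sequence of integers \[ s_i=(l_i,\,-k_{i+1},\,l_{i+1},\,-k_{i+2},\,l_{i+2},\,\dots), \] with indices taken cyclically within the word containing $x_i$. Then the order within the full $x$-bunch, i.e. the left-to-right order of the $\overline{n}$ $x$-turns $(x_i,k_i)$, $i=1,\dots,\overline{n}$, in the split template, is obtained by ordering the labelled bases $x_1,\dots,x_{\overline{n}}$ so that $x_i$ lies to the left of $x_j$ whenever $s_i$ is lexicographically smaller than $s_j$ (in particular, if $l_1,\dots,l_{\overline{n}}$ are pairwise distinct, the order within the full $x$-bunch is the order of the $x_i$ by increasing $l_i$; and if $\overline{n}=1$ it is $(x_1)$). Symmetrically, the order within the full $y$-bunch is obtained by ordering the labelled $y$-bases $y_i$ according to the lexicographic order of the sequences $(-k_{i+1},\,l_{i+1},\,-k_{i+2},\,l_{i+2},\dots)$, i.e. primarily by descending order of the following $x$-exponent, then ascending order of the next $y$-exponent, and so on.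
   Context: A modular link $L$ with $c$ components is given by distinct cyclic permutation classes of positive aperiodic words, written with labelled bases as $w_r=x_{\Sigma(r)+1}^{k_{\Sigma(r)+1}}y_{\Sigma(r)+1}^{l_{\Sigma(r)+1}}\cdots x_{\Sigma(r)+n_r}^{k_{\Sigma(r)+n_r}}y_{\Sigma(r)+n_r}^{l_{\Sigma(r)+n_r}}$, where $\Sigma(r)=\sum_{q<r}n_q$, all exponents are positive integers, and $\overline{n}=\sum_r n_r$. Subscripts of bases and exponents of $w_r$ are read cyclically in $\{\Sigma(r)+1,\dots,\Sigma(r)+n_r\}$. The link is embedded in the Lorenz template; cutting along the branch line gives the split template with an $x$-split line (left ear) and $y$-split line (right ear) on top and the branch line at the bottom, with a marked point $0$ on the branch line between the two ears. Each letter of a word corresponds to a strand (''turn''): an $x$-turn is the overcrossing strand through the left ear corresponding to an $x$-letter, a $y$-turn the undercrossing strand through the right ear corresponding to a $y$-letter. The $(x_i,j)$-turn is the turn of the $j$-th letter of the block $x_i^{k_i}$. The full $x$-bunch is the ordered $\overline{n}$-tuple of the $\overline{n}$ rightmost $x$-turns in the template, namely the $x$-turns that start left of $0$ and end right of $0$ on the branch line; these are exactly the turns $(x_i,k_i)$, $i=1,\dots,\overline{n}$. The order within the full $x$-bunch is the tuple of their labelled bases read from left to right in the split template. The full $y$-bunch and its order are defined analogously with the $\overline{n}$ leftmost $y$-turns $(y_i,l_i)$. *)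

(* Defs.v *)
From mathcomp Require Import all_boot all_order all_algebra.
Set Implicit Arguments. Unset Strict Implicit. Unset Printing Implicit Defensive.
Import Order.TTheory GRing.Theory Num.Theory.

(* A code word is a cyclic list of blocks (k, l) standing for x^k y^l.
   A link is a list of code words, one per component.
   The labelled base x_{Sigma(r)+p+1} (resp. y_...) of the paper corresponds
   to the pair (r, p): component r, block p (0-based). *)
Definition block := (nat * nat)%type.
Definition code_word := seq block.

(* letters: false = x, true = y *)
Definition word_letters (w : code_word) : seq bool :=
  flatten [seq nseq b.1 false ++ nseq b.2 true | b <- w].

(* w_r are positive, aperiodic, and lie in pairwise distinct cyclic classes *)
Definition modular_link (ws : seq code_word) : Prop :=
  [/\ forall r, r < size ws -> 0 < size (nth [::] ws r),
      forall r b, r < size ws -> b \in nth [::] ws r -> 0 < b.1 /\ 0 < b.2,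
      forall r t, r < size ws -> 0 < t < size (word_letters (nth [::] ws r)) ->
        rot t (word_letters (nth [::] ws r)) <> word_letters (nth [::] ws r)
    & forall r r' t, r < size ws -> r' < size ws -> r <> r' ->
        rot t (word_letters (nth [::] ws r)) <> word_letters (nth [::] ws r')].

(* position (0-based) of the first letter of block p in the letter word *)
Definition blk_start (w : code_word) (p : nat) : nat :=
  sumn [seq b.1 + b.2 | b <- take p w].

(* position of the letter of the (x_p, k_p)-turn and of the (y_p, l_p)-turn *)
Definition x_turn_pos (w : code_word) (p : nat) : nat :=
  blk_start w p + (nth (0, 0) w p).1 - 1.
Definition y_turn_pos (w : code_word) (p : nat) : nat :=
  blk_start w p + (nth (0, 0) w p).1 + (nth (0, 0) w p).2 - 1.

(* itinerary (symbolic coordinate on the branch line) of the point of the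
   periodic orbit of w at letter position q: the infinite periodic word
   read cyclically from q *)
Definition itin (w : code_word) (q : nat) : nat -> bool :=
  fun n => nth false (word_letters w) ((q + n) %% size (word_letters w)).

Definition lexlt (T : Type) (lt : T -> T -> Prop) (a b : nat -> T) : Prop :=
  exists n, (forall m, m < n -> a m = b m) /\ lt (a n) (b n).

(* left-to-right order of points on the branch line of the Lorenz template:
   lexicographic order of itineraries with x < y *)
Definition branch_lt : (nat -> bool) -> (nat -> bool) -> Prop :=
  lexlt (fun a b : bool => a = false /\ b = true).

(* turn (x_p, k_p) of component r lies left of turn (x_p', k_p') of r'
   in the split template (compared by their starting points on the
   branch line) *)
Definition x_turn_left (ws : seq code_word) (r p r' p' : nat) : Prop :=
  branch_lt (itin (nth [::] ws r) (x_turn_pos (nth [::] ws r) p))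
            (itin (nth [::] ws r') (x_turn_pos (nth [::] ws r') p')).
Definition y_turn_left (ws : seq code_word) (r p r' p' : nat) : Prop :=
  branch_lt (itin (nth [::] ws r) (y_turn_pos (nth [::] ws r) p))
            (itin (nth [::] ws r') (y_turn_pos (nth [::] ws r') p')).

Definition kexp (w : code_word) (i : nat) : int := Posz (nth (0, 0) w (i %% size w)).1.
Definition lexp (w : code_word) (i : nat) : int := Posz (nth (0, 0) w (i %% size w)).2.

Definition s_seq (ws : seq code_word) (r p : nat) : nat -> int :=
  fun n => let w := nth [::] ws r in
    if odd n then (- kexp w (p + n./2 + 1))%R else lexp w (p + n./2).
Definition t_seq (ws : seq code_word) (r p : nat) : nat -> int :=
  fun n => let w := nth [::] ws r in
    if odd n then lexp w (p + n./2 + 1) else (- kexp w (p + n./2 + 1))%R.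

Definition int_lt (a b : int) : Prop := (a < b)%R.

(* Main.v *)
Require Import Defs.
From mathcomp Require Import all_boot all_order all_algebra.
From mathcomp Require Import zify.
From Stdlib Require Import Classical.
Set Implicit Arguments. Unset Strict Implicit. Unset Printing Implicit Defensive.
Import Order.TTheory GRing.Theory Num.Theory.

Fixpoint decf (fuel : nat) (b : bool) (e : nat -> nat) (n : nat) : bool :=
  match fuel with
  | 0 => b
  | f.+1 => if n < e 0 then b else decf f (~~ b) (fun i => e i.+1) (n - e 0)
  end.
Definition dec b e n := decf n.+1 b e n.
Definition pos (e : nat -> nat) := forall j, 0 < e j.

Lemma decf_eq f b e e' n : (forall j, e j = e' j) -> decf f b e n = decf f b e' n.
Proof.
elim: f b e e' n => [|f IH] b e e' n H //=.
rewrite H; case: ifP => // _; apply: IH => j; by rewrite H.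
Qed.

Lemma dec_eq b e e' n : (forall j, e j = e' j) -> dec b e n = dec b e' n.
Proof. exact: decf_eq. Qed.

Lemma decf_fuel f f' b e n : pos e -> n < f -> n < f' -> decf f b e n = decf f' b e n.
Proof.
elim: f f' b e n => [|f IH] [|f'] b e n He //= Hf Hf'.
case: ifP => // Hn; apply: IH.
- by move=> j; apply: He.
- have := He 0; move/negbT: Hn; rewrite -leqNgt; lia.
- have := He 0; move/negbT: Hn; rewrite -leqNgt; lia.
Qed.

Lemma decE b e n : pos e ->
  dec b e n = if n < e 0 then b else dec (~~b) (fun i => e i.+1) (n - e 0).
Proof.
move=> He; rewrite {1}/dec /=; case: ifP => // Hn; rewrite /dec; apply: decf_fuel; [by move=> j; apply: He| |];
  have := He 0; move/negbT: Hn; rewrite -leqNgt; lia.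
Qed.

Lemma dec_shift b e t n : pos e -> t < e 0 ->
  dec b e (t + n) = dec b (fun j => if j == 0 then e 0 - t else e j) n.
Proof.
move=> He Ht; rewrite decE // [RHS]decE /=; last first.
  by case=> [|j] /=; [rewrite subn_gt0 | apply: He].
have -> : (t + n < e 0) = (n < e 0 - t) by apply/idP/idP; lia.
case: ifP => // _; have -> : t + n - e 0 = n - (e 0 - t) by lia.
by [].
Qed.

Definition signed (b : bool) (e : nat -> nat) (j : nat) : int :=
  if b (+) odd j then Posz (e j) else (- Posz (e j))%R.

Lemma signed_inj b e e' j : signed b e j = signed b e' j -> e j = e' j.
Proof. rewrite /signed; case: ifP => _; [by case | by move/oppr_inj; case]. Qed.

Lemma signedS b e j : signed b e j.+1 = signed (~~b) (fun i => e i.+1) j.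
Proof. by rewrite /signed /= addNb addbN. Qed.

Lemma dec_lt b e e' : pos e -> pos e' ->
  lexlt int_lt (signed b e) (signed b e') -> branch_lt (dec b e) (dec b e').
Proof.
move=> He He' [n [Hpre Hlt]].
move: He He' Hpre Hlt; elim: n b e e' => [|n IH] b e e' He He' Hpre Hlt.
- clear Hpre; case: b Hlt; rewrite /int_lt /signed /=.
  + rewrite ltz_nat => H; exists (e 0); split.
      move=> m Hm; rewrite (decE _ _ He) (decE _ _ He') Hm.
      by have -> : m < e' 0 by lia.
    rewrite (decE _ _ He) (decE _ _ He') ltnn subnn H decE /=.
      by have := He 1; case: (e 1).
    by move=> j; apply: He.
  + rewrite ltrN2 ltz_nat => H; exists (e' 0); split.
      move=> m Hm; rewrite (decE _ _ He) (decE _ _ He') Hm.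
      by have -> : m < e 0 by lia.
    rewrite (decE _ _ He) (decE _ _ He') ltnn subnn H decE /=.
      by have := He' 1; case: (e' 1).
    by move=> j; apply: He'.
- have E0 : e 0 = e' 0 by apply: signed_inj; apply: Hpre.
  have Hp1 : pos (fun i => e i.+1) by move=> j; apply: He.
  have Hp2 : pos (fun i => e' i.+1) by move=> j; apply: He'.
  have Hq : forall m, m < n -> signed (~~b) (fun i => e i.+1) m = signed (~~b) (fun i => e' i.+1) m.
    by move=> m Hm; rewrite -!signedS; apply: Hpre.
  have Hl : int_lt (signed (~~b) (fun i => e i.+1) n) (signed (~~b) (fun i => e' i.+1) n).
    by rewrite -!signedS.
  have [N [HN HltN]] := IH _ _ _ Hp1 Hp2 Hq Hl.
  exists (e 0 + N); split.
    move=> m Hm; rewrite (decE _ _ He) (decE _ _ He') -E0; case: ifP => // Hm0; apply: HN.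
    move/negbT: Hm0; rewrite -leqNgt; lia.
  by rewrite (decE _ _ He) (decE _ _ He') -E0 ltnNge leq_addr /= addKn.
Qed.

Lemma lex_tri (a b : nat -> int) :
  (forall n, a n = b n) \/ lexlt int_lt a b \/ lexlt int_lt b a.
Proof.
case: (classic (exists n, a n != b n)) => [H|H]; last first.
  left => n; apply/eqP; apply/negPn/negP => Hn; apply: H; by exists n.
have [n Hn Hmin] := ex_minnP H.
have Hp : forall m, m < n -> a m = b m.
  move=> m Hm; apply/eqP; apply/negPn/negP => Hab.
  by have := Hmin m Hab; rewrite leqNgt Hm.
right; case: (ltgtP (a n) (b n)) => h.
- by left; exists n.
- by right; exists n; split => // m Hm; rewrite Hp.
- by rewrite h eqxx in Hn.
Qed.

Lemma blt_asym f g : branch_lt f g -> branch_lt g f -> False.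
Proof.
move=> [n [Hn [H1 H2]]] [m [Hm [H3 H4]]].
case: (ltngtP n m) => h.
- have := Hm _ h; congruence.
- have := Hn _ h; congruence.
- subst; congruence.
Qed.

Lemma blt_irr f g : (forall n, f n = g n) -> branch_lt f g -> False.
Proof. move=> E [n [_ [H1 H2]]]; rewrite E H2 in H1; discriminate. Qed.

Lemma dec_iff b e e' : pos e -> pos e' ->
  (branch_lt (dec b e) (dec b e') <-> lexlt int_lt (signed b e) (signed b e')).
Proof.
move=> He He'; split; last exact: dec_lt.
move=> H; case: (lex_tri (signed b e) (signed b e')) => [E|[//|L]].
- exfalso; apply: blt_irr H => n; apply: dec_eq => j; exact: signed_inj (E j).
- exfalso; exact: blt_asym H (dec_lt _ _ L).
Qed.

Lemma lexlt_shift T (lt : T -> T -> Prop) a b a' b' :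
  (forall x, ~ lt x x) -> a 0 = b 0 -> (forall n, a' n = a n.+1) ->
  (forall n, b' n = b n.+1) -> (lexlt lt a b <-> lexlt lt a' b').
Proof.
move=> Hirr H0 Ha Hb; split.
- move=> [[|n] [Hp Hl]]; first by rewrite H0 in Hl; case: (Hirr _ Hl).
  exists n; split; last by rewrite Ha Hb.
  by move=> m Hm; rewrite Ha Hb; apply: Hp.
- move=> [n [Hp Hl]]; exists n.+1; split; last by rewrite -Ha -Hb.
  by case=> [|m] Hm //; rewrite -Ha -Hb; apply: Hp.
Qed.

Lemma lexlt_ext T (lt : T -> T -> Prop) a b a' b' :
  (forall n, a n = a' n) -> (forall n, b n = b' n) ->
  (lexlt lt a b <-> lexlt lt a' b').
Proof.
move=> Ha Hb; split => -[n [Hp Hl]]; exists n; split.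
- by move=> m Hm; rewrite -Ha -Hb; apply: Hp.
- by rewrite -Ha -Hb.
- by move=> m Hm; rewrite Ha Hb; apply: Hp.
- by rewrite Ha Hb.
Qed.

Definition kn (w : code_word) i := (nth (0,0) w (i %% size w)).1.
Definition ln (w : code_word) i := (nth (0,0) w (i %% size w)).2.
Definition R w q j := if odd j then ln w (q + j./2) else kn w (q + j./2).

Lemma size_wl w : size (word_letters w) = sumn [seq b.1 + b.2 | b <- w].
Proof.
elim: w => //= b w IH; rewrite /word_letters /= size_cat size_cat !size_nseq.
by rewrite -/(word_letters w) IH.
Qed.

Lemma blk_nth w q j : q < size w ->
  j < (nth (0,0) w q).1 + (nth (0,0) w q).2 ->
  nth false (word_letters w) (blk_start w q + j) =
  nth false (nseq (nth (0,0) w q).1 false ++ nseq (nth (0,0) w q).2 true) j.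
Proof.
elim: w q => [|b w IH] [|q] //= Hq Hj.
- rewrite /blk_start /= /word_letters /= nth_cat size_cat !size_nseq Hj.
  by [].
- rewrite /blk_start /= /word_letters /= -/(word_letters w).
  rewrite nth_cat size_cat !size_nseq.
  rewrite -/(blk_start w q) ltnNge -addnA leq_addr /= addKn.
  exact: IH.
Qed.

Lemma blkS w q : q < size w ->
  blk_start w q.+1 = blk_start w q + (nth (0,0) w q).1 + (nth (0,0) w q).2.
Proof.
elim: w q => [|b w IH] [|q] //= Hq.
- by rewrite /blk_start /= take0 /= addn0.
- have := IH q Hq; rewrite /blk_start /= => ->.
  by rewrite !addnA.
Qed.

Lemma blk_le w q : blk_start w q <= size (word_letters w).
Proof.
rewrite size_wl; elim: w q => [|b w IH] [|q] //=.
have := IH q; rewrite /blk_start /= leq_add2l; exact.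
Qed.

Lemma blk_size w : blk_start w (size w) = size (word_letters w).
Proof. by rewrite /blk_start take_size size_wl. Qed.

Lemma blk0 w : blk_start w 0 = 0.
Proof. by rewrite /blk_start take0. Qed.

Lemma kn_pos w i : (forall b, b \in w -> 0 < b.1 /\ 0 < b.2) -> 0 < size w -> 0 < kn w i.
Proof.
move=> Hw Hs; rewrite /kn.
by have [] := Hw _ (mem_nth (0,0) (ltn_pmod i Hs)).
Qed.

Lemma ln_pos w i : (forall b, b \in w -> 0 < b.1 /\ 0 < b.2) -> 0 < size w -> 0 < ln w i.
Proof.
move=> Hw Hs; rewrite /ln.
by have [] := Hw _ (mem_nth (0,0) (ltn_pmod i Hs)).
Qed.

Lemma R_pos w q : (forall b, b \in w -> 0 < b.1 /\ 0 < b.2) -> 0 < size w -> pos (R w q).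
Proof. move=> Hw Hs j; rewrite /R; case: odd; [exact: ln_pos | exact: kn_pos]. Qed.

Lemma R0 w q : q < size w -> R w q 0 = (nth (0,0) w q).1.
Proof. by move=> Hq; rewrite /R /= addn0 /kn modn_small. Qed.

Lemma R1 w q : q < size w -> R w q 1 = (nth (0,0) w q).2.
Proof. by move=> Hq; rewrite /R /= addn0 /ln modn_small. Qed.

Lemma RS2 w q j : R w q j.+2 = R w (q.+1 %% size w) j.
Proof.
rewrite /R /= negbK /kn /ln modnDml addSn addnS.
by [].
Qed.

Lemma itin_shift w s t n : itin w (s + t) n = itin w s (t + n).
Proof. by rewrite /itin addnA. Qed.

Lemma itin_blk w : (forall b, b \in w -> 0 < b.1 /\ 0 < b.2) -> 0 < size w ->
  forall n q, q < size w -> itin w (blk_start w q) n = dec false (R w q) n.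
Proof.
move=> Hw Hs; elim/ltn_ind => n IH q Hq.
set k := (nth (0,0) w q).1; set l := (nth (0,0) w q).2.
have Hk : 0 < k by rewrite /k -(R0 Hq); apply: R_pos.
have Hl : 0 < l by rewrite /l -(R1 Hq); apply: R_pos.
have Hend : blk_start w q + k + l <= size (word_letters w) by rewrite -blkS //; apply: blk_le.
rewrite decE; last exact: R_pos.
rewrite R0 //; case: ifP => Hnk.
  rewrite /itin modn_small; last by lia.
  by rewrite blk_nth // -/k -/l ?nth_cat ?size_nseq ?Hnk ?nth_nseq ?Hnk //; lia.
rewrite decE /=; last by move=> j; apply: R_pos.
rewrite R1 //; case: ifP => Hnl.
  rewrite /itin modn_small; last by lia.
  have -> : blk_start w q + n = blk_start w q + (k + (n - k)) by lia.
  rewrite blk_nth // -/k -/l; last by lia.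
  rewrite nth_cat size_nseq ltnNge leq_addr /= addKn nth_nseq Hnl //.
have -> : n - k - l = n - k - l by [].
rewrite (@dec_eq _ _ (R w (q.+1 %% size w))); last by move=> j; rewrite RS2.
rewrite -IH; last by rewrite ltn_pmod.
  2: by move/negbT: Hnk Hnl; rewrite -!leqNgt; lia.
rewrite /itin; congr nth.
have -> : blk_start w q + n = blk_start w q + k + l + (n - k - l)
  by move/negbT: Hnk Hnl; rewrite -!leqNgt; lia.
rewrite -blkS //.
case: (ltnP q.+1 (size w)) => Hq1.
  by rewrite (modn_small Hq1).
have Eq : q.+1 = size w by lia.
by rewrite Eq modnn blk_size blk0 modnDl.
Qed.

Definition ex w p j := if j == 0 then 1 else R w p j.
Definition ey w p j := if j == 0 then 1 else R w p j.+1.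

Lemma ex_pos w p : (forall b, b \in w -> 0 < b.1 /\ 0 < b.2) -> 0 < size w -> pos (ex w p).
Proof. by move=> Hw Hs [|j] //=; apply: R_pos. Qed.

Lemma ey_pos w p : (forall b, b \in w -> 0 < b.1 /\ 0 < b.2) -> 0 < size w -> pos (ey w p).
Proof. by move=> Hw Hs [|j] //=; apply: R_pos. Qed.

Lemma itin_x w p : (forall b, b \in w -> 0 < b.1 /\ 0 < b.2) -> 0 < size w ->
  p < size w -> forall n, itin w (x_turn_pos w p) n = dec false (ex w p) n.
Proof.
move=> Hw Hs Hp n; set k := (nth (0,0) w p).1.
have Hk : 0 < k by rewrite /k -(R0 Hp); apply: R_pos.
rewrite /x_turn_pos -/k.
have -> : blk_start w p + k - 1 = blk_start w p + (k - 1) by lia.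
rewrite itin_shift itin_blk // dec_shift; last by rewrite R0 // -/k; lia.
  2: exact: R_pos.
apply: dec_eq => -[|j]; rewrite /ex //= R0 // -/k; lia.
Qed.

Lemma itin_y w p : (forall b, b \in w -> 0 < b.1 /\ 0 < b.2) -> 0 < size w ->
  p < size w -> forall n, itin w (y_turn_pos w p) n = dec true (ey w p) n.
Proof.
move=> Hw Hs Hp n; set k := (nth (0,0) w p).1; set l := (nth (0,0) w p).2.
have Hk : 0 < k by rewrite /k -(R0 Hp); apply: R_pos.
have Hl : 0 < l by rewrite /l -(R1 Hp); apply: R_pos.
rewrite /y_turn_pos -/k -/l.
have -> : blk_start w p + k + l - 1 = blk_start w p + (k + (l - 1)) by lia.
rewrite itin_shift itin_blk // decE; last exact: R_pos.
rewrite R0 // -/k -addnA ltnNge leq_addr /= addKn.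
rewrite dec_shift; last by rewrite R1 // -/l; lia.
  2: by move=> j; apply: R_pos.
apply: dec_eq => -[|j]; rewrite /ey //= R1 // -/l; lia.
Qed.

Lemma s_signed ws r p n :
  s_seq ws r p n = signed false (ex (nth [::] ws r) p) n.+1.
Proof.
rewrite /s_seq /signed /ex /R /= uphalf_half.
by case: (odd n) => /=; rewrite ?add0n // (addnC 1) addnA.
Qed.

Lemma t_signed ws r p n :
  t_seq ws r p n = signed true (ey (nth [::] ws r) p) n.+1.
Proof.
rewrite /t_seq /signed /ey /R /=.
by case: (odd n) => /=; rewrite addn1 addnS.
Qed.

Theorem mainTheorem4 (ws : seq code_word) :
  modular_link ws ->
  forall r p r' p',
    r < size ws -> p < size (nth [::] ws r) ->
    r' < size ws -> p' < size (nth [::] ws r') ->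
    (x_turn_left ws r p r' p' <-> lexlt int_lt (s_seq ws r p) (s_seq ws r' p')) /\
    (y_turn_left ws r p r' p' <-> lexlt int_lt (t_seq ws r p) (t_seq ws r' p')).
Proof.
move=> [H1 H2 _ _] r p r' p' Hr Hp Hr' Hp'.
have Hw := fun b => H2 r b Hr; have Hs := H1 r Hr.
have Hw' := fun b => H2 r' b Hr'; have Hs' := H1 r' Hr'.
have Hirr : forall x : int, ~ int_lt x x by move=> x; rewrite /int_lt ltxx.
split.
- rewrite /x_turn_left /branch_lt.
  apply: (iff_trans (lexlt_ext _ (itin_x Hw Hs Hp) (itin_x Hw' Hs' Hp'))).
  apply: (iff_trans (dec_iff _ (ex_pos p Hw Hs) (ex_pos p' Hw' Hs'))).
  apply: lexlt_shift => // n; by rewrite s_signed.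
- rewrite /y_turn_left /branch_lt.
  apply: (iff_trans (lexlt_ext _ (itin_y Hw Hs Hp) (itin_y Hw' Hs' Hp'))).
  apply: (iff_trans (dec_iff _ (ey_pos p Hw Hs) (ey_pos p' Hw' Hs'))).
  apply: lexlt_shift => // n; by rewrite t_signed.
Qed.
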